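(* Let $X_1,\dots,X_n$ be operators in a complex Hilbert space $\mathcal{H}$, each Hermitian or skew-Hermitian, and let $\mathbf{m}=(m^{(1)},\dots,m^{(n)})$ be sequences of positive numbers each satisfying (A2). Put $\mathbf{X}=(X_1,\dots,X_n)$. Then $u\in\mathcal{S}_{\mathbf{m}}(\mathbf{X})$ if and only if $u\in C^\infty(\mathbf{X})$ and there exist constants $A,C>0$ such that $|(\mathbf{X}_\alpha u,u)|\le CA^{|\alpha|}\mathbf{m}_\alpha$ for all $\alpha\in M(n)$.
   Context: Notation: $M(n)=\bigcup_{k\ge1}\{1,\dots,n\}^k$; for $\alpha=(i_1,\dots,i_k)\in M(n)$, $|\alpha|=k$ and $|\alpha|_j=\mathrm{card}\{l: i_l=j\}$. $\mathbf{X}_\alpha=X_{i_1}\cdots X_{i_k}$; $C^\infty(\mathbf{X})=\{u\in\mathcal{H}: u\in\mathrm{Dom}(\mathbf{X}_\alpha)\ \forall\alpha\in M(n)\}$. $\mathbf{m}_\alpha=m^{(1)}_{|\alpha|_1}\cdots m^{(n)}_{|\alpha|_n}$. $\mathcal{S}_{\mathbf{m}}(\mathbf{X})=\{u\in C^\infty(\mathbf{X}): \exists A,C>0,\ \|\mathbf{X}_\alpha u\|\le CA^{|\alpha|}\mathbf{m}_\alpha\ \forall\alpha\in M(n)\}$. Condition (A2): there is $H>0$ with $m^{(j)}_{p+q}\le H^{p+q}m^{(j)}_pm^{(j)}_q$ for all $j$ and all $p,q\in\mathbb{N}$. *)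

(* Defs.v *)
From mathcomp Require Import all_boot all_order all_algebra.
From mathcomp Require Import reals.
From mathcomp Require Export complex.
Import GRing.Theory Num.Theory.
Set Implicit Arguments. Unset Strict Implicit. Unset Printing Implicit Defensive.
Local Open Scope ring_scope.
Local Open Scope complex_scope.

Section Hilbert.
Variables (R : realType) (H : lmodType R[i]) (ip : H -> H -> R[i]).

Definition is_inner_product : Prop :=
  [/\ forall (a : R[i]) u v w, ip (a *: u + v) w = a * ip u w + ip v w,
      forall u v, ip v u = (ip u v)^*,
      forall u, 0 <= ip u u
    & forall u, ip u u = 0 -> u = 0].

Definition hnorm (u : H) : R := Num.sqrt (Normc.normc (ip u u)).

Definition hilbert_complete : Prop :=
  forall s : nat -> H,
    (forall e : R, 0 < e -> exists N, forall p q, (N <= p)%N -> (N <= q)%N ->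
        hnorm (s p - s q) < e) ->
    exists v : H, forall e : R, 0 < e -> exists N, forall p, (N <= p)%N ->
        hnorm (s p - v) < e.

Definition is_operator (D : pred H) (X : H -> H) : Prop :=
  [/\ 0 \in D,
      forall (a : R[i]) u v, u \in D -> v \in D -> a *: u + v \in D
    & forall (a : R[i]) u v, u \in D -> v \in D -> X (a *: u + v) = a *: X u + X v].

Definition is_hermitian (D : pred H) (X : H -> H) : Prop :=
  forall u v, u \in D -> v \in D -> ip (X u) v = ip u (X v).

Definition is_skew_hermitian (D : pred H) (X : H -> H) : Prop :=
  forall u v, u \in D -> v \in D -> ip (X u) v = - ip u (X v).

Variables (n : nat) (X : 'I_n -> H -> H) (D : 'I_n -> pred H).

(* X_alpha u = X_{i1} (X_{i2} ( ... (X_{ik} u))) for alpha = [:: i1; ...; ik] *)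
Definition Xmul (alpha : seq 'I_n) (u : H) : H := foldr (fun i v => X i v) u alpha.

Fixpoint in_dom (alpha : seq 'I_n) (u : H) : Prop :=
  match alpha with
  | [::] => True
  | i :: s => in_dom s u /\ Xmul s u \in D i
  end.

Definition in_M (alpha : seq 'I_n) : bool := (0 < size alpha)%N.

Definition Cinf (u : H) : Prop := forall alpha, in_M alpha -> in_dom alpha u.

Variable m : 'I_n -> nat -> R.

Definition m_mul (alpha : seq 'I_n) : R := \prod_(j < n) m j (count_mem j alpha).

(* condition (A2) for all the sequences m^(j), with a common constant *)
Definition cond_A2 : Prop :=
  exists Hc : R, 0 < Hc /\
    forall j p q, m j (p + q) <= Hc ^+ (p + q) * m j p * m j q.

Definition S_m (u : H) : Prop :=
  Cinf u /\ exists A C : R, [/\ 0 < A, 0 < C &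
    forall alpha, in_M alpha ->
      hnorm (Xmul alpha u) <= C * A ^+ size alpha * m_mul alpha].

End Hilbert.

(* Main.v *)
Require Import Defs.
From mathcomp Require Import all_boot all_order all_algebra.
From mathcomp Require Import reals complex ring.
Import Order.TTheory GRing.Theory Num.Theory.
Local Open Scope ring_scope.
Local Open Scope complex_scope.
Local Notation "x ^*" := (conjc x) : ring_scope.

Section Aux.
Variables (R : realType) (H : lmodType R[i]) (ip : H -> H -> R[i]).
Hypothesis Hip : is_inner_product ip.

Lemma mulJ (z : R[i]) : z * z^* = `|z|^+2.
Proof. rewrite -add_Re2_Im2; case: z => a b; simpc. by rewrite [b * a]mulrC addNr -!expr2. Qed.

Lemma normcJ (z : R[i]) : Normc.normc (z^*) = Normc.normc z.
Proof. by case: z => a b; rewrite /Normc.normc /= sqrrN. Qed.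

Lemma normcNN (z : R[i]) : Normc.normc (- z) = Normc.normc z.
Proof. by case: z => a b; rewrite /Normc.normc /= !sqrrN. Qed.

Lemma normc_ge0 (z : R[i]) : 0 <= Normc.normc z.
Proof. by case: z => a b; rewrite /Normc.normc sqrtr_ge0. Qed.

Lemma cjM (x y : R[i]) : (x * y)^* = x^* * y^*.
Proof. exact: rmorphM. Qed.
Lemma cjB (x y : R[i]) : (x - y)^* = x^* - y^*.
Proof. exact: rmorphB. Qed.

Lemma ipDl a u v w : ip (a *: u + v) w = a * ip u w + ip v w.
Proof. by case: Hip => h _ _ _; apply: h. Qed.
Lemma ipJ u v : ip v u = (ip u v)^*.
Proof. by case: Hip => _ h _ _; apply: h. Qed.
Lemma ip_ge0 u : 0 <= ip u u.
Proof. by case: Hip => _ _ h _; apply: h. Qed.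
Lemma ip_eq0 u : ip u u = 0 -> u = 0.
Proof. by case: Hip => _ _ _ h; apply: h. Qed.

Lemma ip0l w : ip 0 w = 0.
Proof.
have h := ipDl 1 0 0 w; rewrite scaler0 addr0 mul1r in h.
by apply: (@addrI _ (ip 0 w)); rewrite addr0 -h.
Qed.
Lemma ipZl a u w : ip (a *: u) w = a * ip u w.
Proof. by have := ipDl a u 0 w; rewrite !addr0 ip0l addr0. Qed.
Lemma ipDl' u v w : ip (u + v) w = ip u w + ip v w.
Proof. by have := ipDl 1 u v w; rewrite scale1r mul1r. Qed.
Lemma ipBl u v w : ip (u - v) w = ip u w - ip v w.
Proof. by rewrite ipDl' -scaleN1r ipZl mulN1r. Qed.
Lemma ip0r w : ip w 0 = 0.
Proof. by rewrite ipJ ip0l conjc0. Qed.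
Lemma ipZr a u w : ip w (a *: u) = a^* * ip w u.
Proof. by rewrite ipJ ipZl cjM -ipJ. Qed.
Lemma ipBr u v w : ip w (u - v) = ip w u - ip w v.
Proof. by rewrite ipJ ipBl cjB -!ipJ. Qed.
Lemma ipR u : (ip u u)^* = ip u u.
Proof. have /complex_realP[k hk] := ger0_real (ip_ge0 u); by rewrite hk conjc_real. Qed.

Lemma CS u v : `|ip v u|^+2 <= ip u u * ip v v.
Proof.
have [p0|pp] := eqVneq (ip u u) 0.
  by rewrite (@ip_eq0 u p0) ip0r ip0l normr0 expr2 !mul0r.
have pp' : 0 < ip u u by rewrite Order.POrderTheory.lt_def pp ip_ge0.
have h := ip_ge0 (ip u u *: v - ip v u *: u).
rewrite ipBl !ipZl !ipBr !ipZr in h.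
rewrite ipR (ipJ v u) in h.
have e : ip u u * (ip u u * ip v v - (ip v u)^* * ip v u) -
       ip v u * (ip u u * (ip v u)^* - (ip v u)^* * ip u u)
       = ip u u * (ip u u * ip v v - ip v u * (ip v u)^*) by ring.
rewrite e pmulr_rge0 // subr_ge0 in h.
by rewrite -mulJ.
Qed.

Lemma CSR u v : Normc.normc (ip v u) <= hnorm ip v * hnorm ip u.
Proof.
have h : ((Normc.normc (ip v u))^+2)%:C <= (Normc.normc (ip u u) * Normc.normc (ip v v))%:C.
  rewrite rmorphXn rmorphM /=.
  have hh := CS u v; rewrite -(ger0_norm (ip_ge0 u)) -(ger0_norm (ip_ge0 v)) in hh.
  exact: hh.
rewrite lecR in h.
rewrite /hnorm mulrC -sqrtrM ?normc_ge0 //.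
rewrite -(ger0_norm (normc_ge0 (ip v u))) -sqrtr_sqr.
by apply: ler_wsqrtr.
Qed.
End Aux.

From mathcomp Require Import lra.

Section Ops.
Variables (R : realType) (H : lmodType R[i]) (ip : H -> H -> R[i]).
Variables (n : nat) (X : 'I_n -> H -> H) (D : 'I_n -> pred H).
Hypothesis HXh : forall j, is_hermitian ip (D j) (X j) \/ is_skew_hermitian ip (D j) (X j).
Variable u : H.
Hypothesis Hd : forall (b : seq 'I_n) j, Xmul X b u \in D j.

Lemma adj s g d :
  ip (Xmul X (s ++ g) u) (Xmul X d u) = ip (Xmul X g u) (Xmul X (rev s ++ d) u) \/
  ip (Xmul X (s ++ g) u) (Xmul X d u) = - ip (Xmul X g u) (Xmul X (rev s ++ d) u).
Proof.
elim: s d => [|i s IH] d; first by left.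
have e : rev (i :: s) ++ d = rev s ++ i :: d by rewrite rev_cons cat_rcons.
have e1 : Xmul X ((i :: s) ++ g) u = X i (Xmul X (s ++ g) u) by [].
have e2 : X i (Xmul X d u) = Xmul X (i :: d) u by [].
rewrite e e1.
have [hh|hh] := HXh i.
- by rewrite (hh _ _ (Hd _ i) (Hd _ i)) e2; exact: (IH (i :: d)).
- rewrite (hh _ _ (Hd _ i) (Hd _ i)) e2.
  by case: (IH (i :: d)) => ->; [right|left]; rewrite ?opprK.
Qed.
End Ops.

Lemma sum_count n (s : seq 'I_n) : (\sum_(j < n) count_mem j s)%N = size s.
Proof.
elim: s => [|i s IH] /=; first by rewrite big1.
rewrite big_split /= IH.
have -> : (\sum_(j < n) (i == j : nat))%N = 1%N.
  rewrite (bigD1 i) //= eqxx big1 // => j hj.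
  by rewrite eq_sym (negbTE hj).
by rewrite add1n.
Qed.

Lemma mbound (R : realType) n (m : 'I_n -> nat -> R) (Hc : R)
  (Hmpos : forall j p, 0 < m j p)
  (hA : forall j p q, m j (p + q) <= Hc ^+ (p + q) * m j p * m j q)
  (a : seq 'I_n) :
  m_mul m (rev a ++ a) <= Hc ^+ (size a + size a) * (m_mul m a * m_mul m a).
Proof.
rewrite /m_mul.
under eq_bigr => j _ do rewrite count_cat count_rev.
have -> : Hc ^+ (size a + size a) *
     ((\prod_(j < n) m j (count_mem j a)) * \prod_(j < n) m j (count_mem j a))
   = \prod_(j < n) (Hc ^+ (count_mem j a + count_mem j a) * m j (count_mem j a)
        * m j (count_mem j a)).
  by rewrite !big_split /= prodrXr big_split /= sum_count mulrA.
apply: ler_prod => j _.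
by rewrite (ltW (Hmpos _ _)) hA.
Qed.

Lemma aux_nra (R : realType) (x y C K : R) :
  x <= C * K -> 0 <= K -> 0 <= x -> 0 <= y -> x * y <= (C * y + 1) * K.
Proof. move=> *; nra. Qed.

Theorem lemma2p3 (R : realType) (H : lmodType R[i]) (ip : H -> H -> R[i])
  (Hip : is_inner_product ip) (Hcompl : hilbert_complete ip)
  (n : nat) (X : 'I_n -> H -> H) (D : 'I_n -> pred H)
  (HX : forall j, is_operator (D j) (X j))
  (HXh : forall j, is_hermitian ip (D j) (X j) \/ is_skew_hermitian ip (D j) (X j))
  (m : 'I_n -> nat -> R) (Hmpos : forall j p, 0 < m j p)
  (HA2 : cond_A2 m) (u : H) :
  S_m ip X D m u <->
  (Cinf X D u /\ exists A C : R, [/\ 0 < A, 0 < C &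
     forall alpha, in_M alpha ->
       Normc.normc (ip (Xmul X alpha u) u) <= C * A ^+ size alpha * m_mul m alpha]).
Proof.
have mge0 : forall a, 0 <= m_mul m a.
  by move=> a; apply: prodr_ge0 => j _; exact: ltW.
split.
- case=> hC [A [C [A0 C0 hb]]]; split=> //.
  have hu : 0 <= hnorm ip u by rewrite /hnorm sqrtr_ge0.
  exists A, (C * hnorm ip u + 1); split=> //.
    have : 0 <= C * hnorm ip u by rewrite mulr_ge0 // ltW.
    lra.
  move=> a ha.

  apply: le_trans (@CSR _ _ _ Hip u (Xmul X a u)) _.
  have hb' := hb a ha.
  have hx : 0 <= hnorm ip (Xmul X a u) by rewrite /hnorm sqrtr_ge0.
  have K0 : 0 <= A ^+ size a * m_mul m a by rewrite mulr_ge0 // exprn_ge0 // ltW.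
  rewrite -mulrA in hb'; rewrite -mulrA.
  exact: aux_nra.
- case=> hC [A [C [A0 C0 hb]]]; split=> //.
  have [Hc [Hc0 hA]] := HA2.
  exists (A * Hc), (Num.sqrt C); split; [by rewrite mulr_gt0 | by rewrite sqrtr_gt0 |].
  move=> a ha.
  have Hd : forall b j, Xmul X b u \in D j.
    by move=> b j; case: (hC (j :: b) isT).
  have key : Normc.normc (ip (Xmul X a u) (Xmul X a u))
           = Normc.normc (ip (Xmul X (rev a ++ a) u) u).
    have := @adj _ _ _ _ _ _ HXh u Hd a [::] a; rewrite cats0.
    by case=> ->; rewrite ?normcNN (@ipJ _ _ _ Hip (Xmul X (rev a ++ a) u) u) normcJ.
  have hb2 := hb (rev a ++ a).
  rewrite /in_M size_cat size_rev in hb2.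
  have {}hb2 := hb2 (ltn_addl _ ha).
  have hm := @mbound _ _ _ _ Hmpos hA a.
  rewrite /hnorm key.
  set M := m_mul m a.
  set k := size a in hb2 hm *.
  have P0 : 0 <= Num.sqrt C * (A * Hc) ^+ k * M.
    by rewrite !mulr_ge0 ?sqrtr_ge0 ?exprn_ge0 ?mge0 // mulr_ge0 // ltW.
  rewrite -(ger0_norm P0) -sqrtr_sqr.
  apply: ler_wsqrtr.
  apply: le_trans hb2 _.
  have -> : (Num.sqrt C * (A * Hc) ^+ k * M) ^+ 2
          = C * A ^+ (k + k) * (Hc ^+ (k + k) * (M * M)).
    rewrite !exprMn sqr_sqrtr ?ltW // !exprD !expr2; ring.
  apply: ler_wpM2l => //.
  by rewrite mulr_ge0 ?exprn_ge0 // ltW.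
Qed.
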